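(* Let $D$ be a connected locally finite C-homogeneous digraph such that $N^+(x)$ and $N^-(x)$ are independent sets for all $x\in VD$. If $D$ contains a directed triangle as a subdigraph, then $|N^+(x)|=|N^-(x)|$ for every $x\in VD$.
   Context: A digraph has an irreflexive, antisymmetric edge relation; connectedness and local finiteness refer to the underlying undirected graph. $D$ is C-homogeneous if every isomorphism between finite connected induced subdigraphs extends to an automorphism of $D$. $N^+(x)=\{y: xy\in ED\}$, $N^-(x)=\{y: yx\in ED\}$; a set is independent if no two of its vertices are adjacent. *)

(* Defs.v *)
From Stdlib Require Import List Relations.
Import ListNotations.

Section Digraph.
Context {V : Type} (E : V -> V -> Prop).

Definition is_digraph : Prop :=
  (forall x, ~ E x x) /\ (forall x y, E x y -> ~ E y x).

Definition adj (x y : V) : Prop := E x y \/ E y x.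

Definition out_nbr (x : V) : V -> Prop := fun y => E x y.
Definition in_nbr (x : V) : V -> Prop := fun y => E y x.

Definition connected : Prop := forall x y, clos_refl_trans V adj x y.

Definition locally_finite : Prop :=
  forall x, exists l : list V, forall y, adj x y -> In y l.

Definition independent (A : V -> Prop) : Prop :=
  forall x y, A x -> A y -> ~ adj x y.

Definition finite_set (A : V -> Prop) : Prop :=
  exists l : list V, forall x, A x -> In x l.

Definition induced_connected (A : V -> Prop) : Prop :=
  forall x y, A x -> A y ->
    clos_refl_trans V (fun a b => A a /\ A b /\ adj a b) x y.

Definition induced_iso (A B : V -> Prop) (f : V -> V) : Prop :=
  (forall x, A x -> B (f x)) /\
  (forall x y, A x -> A y -> f x = f y -> x = y) /\
  (forall y, B y -> exists x, A x /\ f x = y) /\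
  (forall x y, A x -> A y -> (E x y <-> E (f x) (f y))).

Definition automorphism (g : V -> V) : Prop :=
  (forall x y, g x = g y -> x = y) /\
  (forall y, exists x, g x = y) /\
  (forall x y, E x y <-> E (g x) (g y)).

Definition C_homogeneous : Prop :=
  forall (A B : V -> Prop) (f : V -> V),
    finite_set A -> finite_set B ->
    induced_connected A -> induced_connected B ->
    induced_iso A B f ->
    exists g, automorphism g /\ forall x, A x -> g x = f x.

Definition has_card (P : V -> Prop) (n : nat) : Prop :=
  exists l : list V, NoDup l /\ (forall y, P y <-> In y l) /\ length l = n.

Definition has_directed_triangle : Prop :=
  exists a b c, E a b /\ E b c /\ E c a.

End Digraph.

(* Main.v *)
Require Import Defs.
From Stdlib Require Import List Relations.
From Stdlib Require Import Classical ClassicalEpsilon Arith Lia.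
Import ListNotations.

Definition dec (P : Prop) : bool :=
  if excluded_middle_informative P then true else false.

Lemma dec_iff (P : Prop) : dec P = true <-> P.
Proof. unfold dec; destruct (excluded_middle_informative P); intuition congruence. Qed.

Definition eqdec {A : Type} (x y : A) : {x = y} + {x <> y} :=
  excluded_middle_informative (x = y).

Lemma nd_len {A : Type} (l1 l2 : list A) :
  NoDup l1 -> NoDup l2 -> (forall a, In a l1 <-> In a l2) -> length l1 = length l2.
Proof.
  intros H1 H2 H. apply Nat.le_antisymm; apply NoDup_incl_length; auto;
  intros a Ha; apply H; auto.
Qed.

Lemma enum_spec {V : Type} (P : V -> Prop) (M : list V) :
  NoDup M -> (forall w, P w -> In w M) ->
  NoDup (filter (fun w => dec (P w)) M) /\
  forall w, P w <-> In w (filter (fun w => dec (P w)) M).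
Proof.
  intros HN HM. split. apply NoDup_filter; auto.
  intros w. rewrite filter_In, dec_iff. intuition.
Qed.

Lemma finite_list {V : Type} (P : V -> Prop) :
  (exists l, forall w, P w -> In w l) ->
  exists l, NoDup l /\ forall w, P w <-> In w l.
Proof.
  intros [l Hl]. exists (filter (fun w => dec (P w)) (nodup eqdec l)).
  apply enum_spec. apply NoDup_nodup. intros w Hw. apply nodup_In; auto.
Qed.

Lemma card_unique {V : Type} (P : V -> Prop) n (l : list V) :
  has_card P n -> NoDup l -> (forall w, P w <-> In w l) -> length l = n.
Proof.
  intros [l' [H1 [H2 H3]]] Hl Hi. rewrite <- H3. apply nd_len; auto.
  intro a. rewrite <- Hi, H2. tauto.
Qed.

Section S.
Variables (V : Type) (E : V -> V -> Prop).

Definition Tri (u v : V) : V -> Prop := fun w => E v w /\ E w u.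

Lemma arc_auto : is_digraph E -> C_homogeneous E ->
  forall u v u' v', E u v -> E u' v' ->
  exists g, automorphism E g /\ g u = u' /\ g v = v'.
Proof.
  intros [Hirr Has] HC u v u' v' Huv Huv'.
  assert (Hne : u <> v) by (intro; subst; eapply Hirr; eauto).
  assert (Hne' : u' <> v') by (intro; subst; eapply Hirr; eauto).
  set (f := fun w => if excluded_middle_informative (w = u) then u' else v').
  assert (fu : f u = u') by (unfold f; destruct (excluded_middle_informative (u = u)); congruence).
  assert (fv : f v = v') by (unfold f; destruct (excluded_middle_informative (v = u)); congruence).
  destruct (HC (fun w => w = u \/ w = v) (fun w => w = u' \/ w = v') f) as [g [Hg Hgf]].
  - exists [u; v]. intros x [->| ->]; simpl; auto.
  - exists [u'; v']. intros x [->| ->]; simpl; auto.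
  - intros x y [->| ->] [->| ->]; try apply rt_refl; apply rt_step;
      repeat split; auto; unfold adj; auto.
  - intros x y [->| ->] [->| ->]; try apply rt_refl; apply rt_step;
      repeat split; auto; unfold adj; auto.
  - split; [|split; [|split]].
    + intros x [->| ->]; [rewrite fu | rewrite fv]; auto.
    + intros x y [->| ->] [->| ->]; rewrite ?fu, ?fv; intro; congruence.
    + intros y [->| ->]; [exists u | exists v]; auto.
    + intros x y [->| ->] [->| ->]; rewrite ?fu, ?fv; split; intro H;
        auto; exfalso; first [eapply Hirr; eassumption | eapply Has; eassumption].
  - exists g. split; auto. split; rewrite Hgf; auto.
Qed.

Lemma tri_transfer (g : V -> V) u v u' v' n :
  automorphism E g -> g u = u' -> g v = v' ->
  has_card (Tri u v) n -> has_card (Tri u' v') n.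
Proof.
  intros [Hinj [Hsur Hiso]] Hu Hv [l [H1 [H2 H3]]].
  exists (map g l). split; [|split].
  - apply NoDup_map_NoDup_ForallPairs; auto. intros a b _ _; apply Hinj.
  - intro y. destruct (Hsur y) as [w <-]. rewrite in_map_iff. split.
    + intros [Ha Hb]. exists w. split; auto. apply H2. subst.
      split; apply Hiso; auto.
    + intros [w' [Hw' Hin]]. apply Hinj in Hw'. subst w'. apply H2 in Hin.
      destruct Hin as [Ha Hb]. subst. split; apply (proj1 (Hiso _ _)); auto.
  - rewrite length_map; auto.
Qed.

End S.
Arguments Tri {V} E u v _.

Theorem lemma4p11 (V : Type) (E : V -> V -> Prop) :
  is_digraph E ->
  connected E ->
  locally_finite E ->
  C_homogeneous E ->
  (forall x, independent E (out_nbr E x) /\ independent E (in_nbr E x)) ->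
  has_directed_triangle E ->
  forall x : V, exists n : nat,
    has_card (out_nbr E x) n /\ has_card (in_nbr E x) n.
Proof.
  intros Hd _ Hlf HC _ [a [b [c [Hab [Hbc Hca]]]]] x.
  assert (fin : forall (y : V) (P : V -> Prop), (forall w, P w -> adj E y w) ->
            exists l, NoDup l /\ forall w, P w <-> In w l).
  { intros y P HP. apply finite_list. destruct (Hlf y) as [l Hl].
    exists l; auto. }
  destruct (fin a (Tri E a b)) as [lt [Hlt1 Hlt2]].
  { intros w [_ H]. right; auto. }
  set (t := length lt).
  assert (Ht : has_card (Tri E a b) t) by (exists lt; repeat split; auto; apply Hlt2; auto).
  assert (tpos : t > 0).
  { unfold t. destruct lt; simpl; [|lia]. exfalso. apply (Hlt2 c). split; auto. }
  assert (Hall : forall u v, E u v -> has_card (Tri E u v) t).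
  { intros u v Huv. destruct (arc_auto V E Hd HC a b u v Hab Huv) as [g [Hg [Hu Hv]]].
    eapply tri_transfer; eauto. }
  destruct (fin x (out_nbr E x)) as [lo [Hlo1 Hlo2]].
  { intros w H; left; auto. }
  destruct (fin x (in_nbr E x)) as [li [Hli1 Hli2]].
  { intros w H; right; auto. }
  set (P1 := flat_map (fun y => map (fun w => (y, w))
               (filter (fun w => dec (Tri E x y w)) li)) lo).
  set (P2 := flat_map (fun z => map (fun y => (y, z))
               (filter (fun y => dec (Tri E z x y)) lo)) li).
  assert (L1 : length P1 = length lo * t).
  { apply flat_map_constant_length. intros y Hy. rewrite length_map.
    apply Hlo2 in Hy. destruct (enum_spec (Tri E x y) li Hli1) as [A B].
    { intros w [_ H]. apply Hli2; auto. }
    exact (card_unique _ _ _ (Hall x y Hy) A B). }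
  assert (L2 : length P2 = length li * t).
  { apply flat_map_constant_length. intros z Hz. rewrite length_map.
    apply Hli2 in Hz. destruct (enum_spec (Tri E z x) lo Hlo1) as [A B].
    { intros w [H _]. apply Hlo2; auto. }
    exact (card_unique _ _ _ (Hall z x Hz) A B). }
  assert (Hmem : forall p, In p P1 <-> In p P2).
  { intros [y z]. unfold P1, P2. rewrite !in_flat_map. split.
    - intros [y' [Hy' Hin]]. rewrite in_map_iff in Hin.
      destruct Hin as [w [Hw Hin]]. injection Hw; intros; subst.
      rewrite filter_In, dec_iff in Hin. destruct Hin as [Hin [H1 H2]].
      exists z. split; auto. apply in_map_iff. exists y. split; auto.
      rewrite filter_In, dec_iff. split; auto. split; auto. apply Hlo2; auto.
    - intros [z' [Hz' Hin]]. rewrite in_map_iff in Hin.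
      destruct Hin as [w [Hw Hin]]. injection Hw; intros; subst.
      rewrite filter_In, dec_iff in Hin. destruct Hin as [Hin [H1 H2]].
      exists y. split; auto. apply in_map_iff. exists z. split; auto.
      rewrite filter_In, dec_iff. split; auto. split; auto. apply Hli2; auto. }
  assert (ND : forall (l : list V) (f : V -> list V) (mk : V -> V -> V * V),
            NoDup l -> (forall y, NoDup (f y)) ->
            (forall y w y' w', mk y w = mk y' w' -> y = y' /\ w = w') ->
            NoDup (flat_map (fun y => map (mk y) (f y)) l)).
  { intros l f mk Hl Hf Hmk. induction Hl as [|y l Hy Hl IH]; simpl.
    - constructor.
    - apply NoDup_app; auto.
      + apply NoDup_map_NoDup_ForallPairs; auto.
        intros p q _ _ Hpq. apply Hmk in Hpq; tauto.
      + intros p Hp Hp2. rewrite in_map_iff in Hp. destruct Hp as [w [<- _]].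
        rewrite in_flat_map in Hp2. destruct Hp2 as [y' [Hy' Hin]].
        rewrite in_map_iff in Hin. destruct Hin as [w' [Heq _]].
        apply Hmk in Heq. destruct Heq; subst; auto. }
  assert (Heq : length P1 = length P2).
  { apply nd_len; auto.
    - apply (ND lo _ (fun y w => (y, w))); auto.
      + intro y. apply NoDup_filter; auto.
      + intros. injection H; auto.
    - apply (ND li _ (fun z y => (y, z))); auto.
      + intro y. apply NoDup_filter; auto.
      + intros. injection H; auto. }
  rewrite L1, L2 in Heq.
  assert (Hlen : length lo = length li).
  { apply Nat.mul_cancel_r with t; lia. }
  exists (length lo). split.
  - exists lo. auto.
  - exists li. auto.
Qed.
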